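(* Let $X$ be a metric space and $K$ a finite simplicial complex, realized in a simplex in some $\mathbb{R}^N$ and equipped with the induced metric. Then every uniformly continuous map $f:X\to K$ is a uniform limit of Lipschitz maps $g_k:X\to K$. *)

(* Defs.v *)
From Stdlib Require Import Reals List.
Import ListNotations.
Open Scope R_scope.

Fixpoint rsum (n : nat) (f : nat -> R) : R :=
  match n with
  | O => 0
  | S k => rsum k f + f k
  end.

(* Points of R^N are represented by functions nat -> R whose coordinates
   of index >= N vanish (see [in_realization]); Euclidean distance. *)
Definition edist (N : nat) (x y : nat -> R) : R :=
  sqrt (rsum N (fun i => (x i - y i) ^ 2)).

(* The vertices V 0, ..., V m (V j i = i-th coordinate of vertex j)
   are affinely independent in R^N, i.e. span an m-simplex. *)
Definition affinely_independent (N m : nat) (V : nat -> nat -> R) : Prop :=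
  forall c : nat -> R,
    rsum (S m) c = 0 ->
    (forall i, (i < N)%nat -> rsum (S m) (fun j => c j * V j i) = 0) ->
    forall j, (j <= m)%nat -> c j = 0.

Definition simplicial_complex (m : nat) (F : list (list nat)) : Prop :=
  (forall s, In s F -> s <> [] /\ forall j, In j s -> (j <= m)%nat) /\
  (forall s t, In s F -> t <> [] -> incl t s ->
     exists t', In t' F /\ forall j, In j t <-> In j t').

(* x lies in the geometric realization |K| of the subcomplex F of the
   simplex with vertices V 0 .. V m in R^N: x is a convex combination of
   the vertices whose support is contained in some face of F. *)
Definition in_realization (N m : nat) (V : nat -> nat -> R)
    (F : list (list nat)) (x : nat -> R) : Prop :=
  (forall i, (N <= i)%nat -> x i = 0) /\
  exists t : nat -> R,
    (forall j, (j <= m)%nat -> 0 <= t j) /\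
    rsum (S m) t = 1 /\
    (forall i, (i < N)%nat -> x i = rsum (S m) (fun j => t j * V j i)) /\
    exists s, In s F /\ forall j, (j <= m)%nat -> t j <> 0 -> In j s.

Definition uniformly_continuous_into (X : Metric_Space) (N : nat)
    (f : Base X -> nat -> R) : Prop :=
  forall eps, 0 < eps -> exists delta, 0 < delta /\
    forall x y, dist X x y < delta -> edist N (f x) (f y) < eps.

Definition lipschitz_into (X : Metric_Space) (N : nat)
    (g : Base X -> nat -> R) : Prop :=
  exists L, forall x y, edist N (g x) (g y) <= L * dist X x y.

Definition uniform_limit (X : Metric_Space) (N : nat)
    (g : nat -> Base X -> nat -> R) (f : Base X -> nat -> R) : Prop :=
  forall eps, 0 < eps -> exists k0, forall k, (k0 <= k)%nat ->
    forall x, edist N (g k x) (f x) < eps.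

(* Main.v *)
Require Import Defs.
From Stdlib Require Import Reals List Lra Lia ClassicalEpsilon.
Open Scope R_scope.

Lemma rsum_ext n f g : (forall i, (i < n)%nat -> f i = g i) -> rsum n f = rsum n g.
Proof. induction n; simpl; intros H; [reflexivity|]. rewrite IHn by (intros; apply H; lia). rewrite H by lia. reflexivity. Qed.

Lemma rsum_plus n f g : rsum n (fun i => f i + g i) = rsum n f + rsum n g.
Proof. induction n; simpl; [ring|]. rewrite IHn; ring. Qed.

Lemma rsum_minus n f g : rsum n (fun i => f i - g i) = rsum n f - rsum n g.
Proof. induction n; simpl; [ring|]. rewrite IHn; ring. Qed.

Lemma rsum_scal_l n c f : rsum n (fun i => c * f i) = c * rsum n f.
Proof. induction n; simpl; [ring|]. rewrite IHn; ring. Qed.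

Lemma rsum_scal_r n c f : rsum n (fun i => f i * c) = rsum n f * c.
Proof. induction n; simpl; [ring|]. rewrite IHn; ring. Qed.

Lemma rsum_abs n f : Rabs (rsum n f) <= rsum n (fun i => Rabs (f i)).
Proof. induction n; simpl. rewrite Rabs_R0; lra.
  eapply Rle_trans; [apply Rabs_triang|]. lra. Qed.

Lemma rsum_le n f g : (forall i, (i < n)%nat -> f i <= g i) -> rsum n f <= rsum n g.
Proof. induction n; simpl; intros H; [lra|].
  assert (rsum n f <= rsum n g) by (apply IHn; intros; apply H; lia).
  assert (f n <= g n) by (apply H; lia). lra. Qed.

Lemma rsum_nonneg n f : (forall i, (i < n)%nat -> 0 <= f i) -> 0 <= rsum n f.
Proof. intros H. replace 0 with (rsum n (fun _ => 0)). apply rsum_le; auto.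
  clear H; induction n; simpl; [reflexivity|rewrite IHn; ring]. Qed.

Lemma rsum_ge_term n f j : (forall i, (i < n)%nat -> 0 <= f i) -> (j < n)%nat -> f j <= rsum n f.
Proof. induction n; intros H Hj; [lia|]. simpl.
  assert (0 <= rsum n f) by (apply rsum_nonneg; intros; apply H; lia).
  destruct (Nat.eq_dec j n) as [->|Hne]. lra.
  assert (f j <= rsum n f) by (apply IHn; [intros; apply H; lia|lia]).
  assert (0 <= f n) by (apply H; lia). lra. Qed.

Lemma rsum_const n c : rsum n (fun _ => c) = INR n * c.
Proof. induction n; simpl rsum; [simpl; ring|]. rewrite IHn, S_INR; ring. Qed.

Lemma sqrt_add_sq S a : 0 <= S -> sqrt (S + a ^ 2) <= sqrt S + Rabs a.
Proof. intros HS.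
  rewrite <- (sqrt_square (sqrt S + Rabs a)).
  2:{ pose proof (sqrt_pos S); pose proof (Rabs_pos a); lra. }
  apply sqrt_le_1_alt.
  assert (Hsq : sqrt S * sqrt S = S) by (apply sqrt_sqrt; lra).
  assert (Ha : Rabs a * Rabs a = a ^ 2) by (rewrite <- Rabs_mult, Rabs_right by nra; ring).
  pose proof (sqrt_pos S); pose proof (Rabs_pos a).
  assert (0 <= sqrt S * Rabs a) by (apply Rmult_le_pos; auto).
  replace ((sqrt S + Rabs a) * (sqrt S + Rabs a)) with (sqrt S * sqrt S + Rabs a * Rabs a + 2 * (sqrt S * Rabs a)) by ring.
  lra. Qed.

Lemma rsum_sq_nonneg n (f : nat -> R) : 0 <= rsum n (fun i => f i ^ 2).
Proof. apply rsum_nonneg; intros; nra. Qed.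

Lemma edist_le_l1 N x y : edist N x y <= rsum N (fun i => Rabs (x i - y i)).
Proof. unfold edist. induction N; cbn [rsum]. rewrite sqrt_0; lra.
  eapply Rle_trans; [apply sqrt_add_sq, rsum_sq_nonneg|]. lra. Qed.

Lemma coord_le_edist N x y i : (i < N)%nat -> Rabs (x i - y i) <= edist N x y.
Proof. intros Hi. unfold edist. rewrite <- sqrt_Rsqr_abs. apply sqrt_le_1_alt.
  unfold Rsqr. replace ((x i - y i) * (x i - y i)) with ((x i - y i) ^ 2) by ring.
  apply (rsum_ge_term N (fun k => (x k - y k) ^ 2) i); auto. intros; apply pow2_ge_0. Qed.

Lemma edist_bound N x y eta : (forall i, (i < N)%nat -> Rabs (x i - y i) <= eta) -> edist N x y <= INR N * eta.
Proof. intros H. eapply Rle_trans; [apply edist_le_l1|]. rewrite <- rsum_const. apply rsum_le; auto. Qed.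

Section Lip.
Variable X : Metric_Space.
Definition Lip (a : Base X -> R) := exists L, forall x y, Rabs (a x - a y) <= L * dist X x y.

Lemma dist_nonneg x y : 0 <= dist X x y.
Proof. pose proof (dist_pos X x y); lra. Qed.

Lemma Lip_pos a : Lip a -> exists L, 0 <= L /\ forall x y, Rabs (a x - a y) <= L * dist X x y.
Proof. intros [L H]. exists (Rmax L 0). split. apply Rmax_r. intros x y.
  eapply Rle_trans; [apply H|]. apply Rmult_le_compat_r; [apply dist_nonneg|apply Rmax_l]. Qed.

Lemma Lip_const c : Lip (fun _ => c).
Proof. exists 0. intros. replace (c - c) with 0 by ring. rewrite Rabs_R0; lra. Qed.

Lemma Lip_plus a b : Lip a -> Lip b -> Lip (fun x => a x + b x).
Proof. intros [La Ha] [Lb Hb]. exists (La + Lb). intros x y.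
  replace (a x + b x - (a y + b y)) with ((a x - a y) + (b x - b y)) by ring.
  eapply Rle_trans; [apply Rabs_triang|]. specialize (Ha x y); specialize (Hb x y). lra. Qed.

Lemma Lip_scal c a : Lip a -> Lip (fun x => c * a x).
Proof. intros [La Ha]. exists (Rabs c * La). intros x y.
  replace (c * a x - c * a y) with (c * (a x - a y)) by ring. rewrite Rabs_mult.
  rewrite Rmult_assoc. apply Rmult_le_compat_l; [apply Rabs_pos|apply Ha]. Qed.

Lemma Lip_mult a b A B : Lip a -> Lip b -> (forall x, Rabs (a x) <= A) -> (forall x, Rabs (b x) <= B) ->
  Lip (fun x => a x * b x).
Proof. intros Ha Hb HA HB. apply Lip_pos in Ha as [La [La0 Ha]]. apply Lip_pos in Hb as [Lb [Lb0 Hb]].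
  exists (A * Lb + B * La). intros x y.
  replace (a x * b x - a y * b y) with (a x * (b x - b y) + b y * (a x - a y)) by ring.
  eapply Rle_trans; [apply Rabs_triang|]. rewrite !Rabs_mult.
  pose proof (dist_nonneg x y).
  assert (Rabs (a x) * Rabs (b x - b y) <= A * (Lb * dist X x y)).
  { apply Rmult_le_compat; auto using Rabs_pos. }
  assert (Rabs (b y) * Rabs (a x - a y) <= B * (La * dist X x y)).
  { apply Rmult_le_compat; auto using Rabs_pos. }
  nra. Qed.

Lemma Lip_inv b beta : Lip b -> 0 < beta -> (forall x, beta <= b x) -> Lip (fun x => / b x).
Proof. intros Hb Hbeta Hge. apply Lip_pos in Hb as [Lb [Lb0 Hb]].
  exists (Lb / (beta * beta)). intros x y.
  assert (Hx := Hge x); assert (Hy := Hge y).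
  replace (/ b x - / b y) with ((b y - b x) / (b x * b y)) by (field; lra).
  unfold Rdiv. rewrite Rabs_mult, Rabs_inv, (Rabs_right (b x * b y)) by nra.
  rewrite Rabs_minus_sym.
  assert (/ (b x * b y) <= / (beta * beta)).
  { apply Rinv_le_contravar; nra. }
  assert (0 <= / (b x * b y)) by (left; apply Rinv_0_lt_compat; nra).
  specialize (Hb x y). pose proof (Rabs_pos (b x - b y)). pose proof (dist_nonneg x y).
  assert (Rabs (b x - b y) * / (b x * b y) <= Lb * dist X x y * / (beta * beta)).
  { apply Rmult_le_compat; auto. }
  lra. Qed.

Lemma Lip_rsum n (a : nat -> Base X -> R) : (forall j, (j < n)%nat -> Lip (a j)) -> Lip (fun x => rsum n (fun j => a j x)).
Proof. induction n; intros H; simpl. apply Lip_const.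
  apply Lip_plus. apply IHn; intros; apply H; lia. apply H; lia. Qed.

Lemma Lip_ext a b : Lip a -> (forall x, a x = b x) -> Lip b.
Proof. intros [L H] E. exists L. intros; rewrite <- !E; auto. Qed.

Lemma sum_Lip N (g : Base X -> nat -> R) : (forall i, (i < N)%nat -> Lip (fun x => g x i)) ->
  exists L, forall x y, rsum N (fun i => Rabs (g x i - g y i)) <= L * dist X x y.
Proof. induction N; intros H. exists 0; intros; simpl; lra.
  destruct IHN as [L1 H1]. intros; apply H; lia.
  destruct (H N ltac:(lia)) as [L2 H2]. exists (L1 + L2). intros x y; simpl.
  specialize (H1 x y); specialize (H2 x y). lra. Qed.

Lemma lipschitz_of_coords N (g : Base X -> nat -> R) : (forall i, (i < N)%nat -> Lip (fun x => g x i)) -> lipschitz_into X N g.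
Proof. intros H. destruct (sum_Lip N g H) as [L HL]. exists L. intros x y.
  eapply Rle_trans; [apply edist_le_l1|apply HL]. Qed.
End Lip.

Section Inf.
Variable X : Metric_Space.
Definition infE (u : Base X -> R) (L : R) (x : Base X) (z : R) : Prop :=
  exists y, z = - (Rabs (u y) + Rabs L * dist X x y).
Lemma infE_bound u L x : bound (infE u L x).
Proof. exists 0. intros z [y ->]. pose proof (Rabs_pos (u y)). pose proof (Rabs_pos L).
  pose proof (dist_nonneg X x y). assert (0 <= Rabs L * dist X x y) by (apply Rmult_le_pos; auto). lra. Qed.
Lemma infE_ne u L x : exists z, infE u L x z.
Proof. eexists. exists x. reflexivity. Qed.
Definition infc u L x := - proj1_sig (completeness _ (infE_bound u L x) (infE_ne u L x)).

Lemma infc_le u L x y : infc u L x <= Rabs (u y) + Rabs L * dist X x y.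
Proof. unfold infc. destruct (completeness (infE u L x) (infE_bound u L x) (infE_ne u L x)) as [m [Hub Hl]]; simpl.
  assert (infE u L x (- (Rabs (u y) + Rabs L * dist X x y))) by (exists y; reflexivity).
  specialize (Hub _ H). lra. Qed.

Lemma infc_ge u L x b : (forall y, b <= Rabs (u y) + Rabs L * dist X x y) -> b <= infc u L x.
Proof. intros H. unfold infc. destruct (completeness (infE u L x) (infE_bound u L x) (infE_ne u L x)) as [m [Hub Hl]]; simpl.
  assert (m <= - b). { apply Hl. intros z [y ->]. specialize (H y). lra. } lra. Qed.

Lemma infc_nonneg u L x : 0 <= infc u L x.
Proof. apply infc_ge. intros y. pose proof (Rabs_pos (u y)). pose proof (Rabs_pos L).
  pose proof (dist_nonneg X x y). assert (0 <= Rabs L * dist X x y) by (apply Rmult_le_pos; auto). lra. Qed.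

Lemma infc_le_u u L x : infc u L x <= Rabs (u x).
Proof. eapply Rle_trans; [apply (infc_le u L x x)|]. rewrite (proj2 (dist_refl X x x) eq_refl). lra. Qed.

Lemma infc_Lip u L : Lip X (infc u L).
Proof. exists (Rabs L). 
  assert (H : forall x x', infc u L x - infc u L x' <= Rabs L * dist X x x').
  { intros x x'. cut (infc u L x - Rabs L * dist X x x' <= infc u L x'). lra.
    apply infc_ge. intros y. pose proof (infc_le u L x y). pose proof (dist_tri X x y x').
    pose proof (Rabs_pos L).
    assert (Rabs L * dist X x y <= Rabs L * (dist X x x' + dist X x' y)) by (apply Rmult_le_compat_l; auto).
    rewrite Rmult_plus_distr_l in H2. lra. }
  intros x y. apply Rabs_le. pose proof (H x y). pose proof (H y x). rewrite dist_sym in H1. lra. Qed.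

Lemma infc_close u L delta eps : (forall x, 0 <= u x <= 1) -> 0 < delta -> 0 <= eps ->
  (forall x y, dist X x y < delta -> Rabs (u x - u y) <= eps) -> 1 <= L * delta ->
  forall x, u x - eps <= infc u L x.
Proof. intros Hu Hd He Hc HL x. apply infc_ge. intros y.
  assert (HL0 : 0 < L) by (destruct (Rle_or_lt L 0); [nra|auto]).
  rewrite (Rabs_right L) by lra. rewrite (Rabs_right (u y)) by (destruct (Hu y); lra).
  pose proof (Hu x); pose proof (Hu y).
  destruct (Rlt_or_le (dist X x y) delta) as [Hlt|Hge].
  - specialize (Hc x y Hlt). pose proof (Rle_abs (u x - u y)). pose proof (Rle_abs (-(u x - u y))). rewrite Rabs_Ropp in H2. pose proof (dist_nonneg X x y).
    assert (0 <= L * dist X x y) by (apply Rmult_le_pos; lra). lra.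
  - assert (L * delta <= L * dist X x y) by (apply Rmult_le_compat_l; lra). lra. Qed.
End Inf.


Lemma core (X : Metric_Space) (N m : nat) (V : nat -> nat -> R) (F : list (list nat))
  (f : Base X -> nat -> R) (t : Base X -> nat -> R)
  (Ht0 : forall x j, (j <= m)%nat -> 0 <= t x j)
  (Ht1 : forall x, rsum (S m) (t x) = 1)
  (Htf : forall x i, (i < N)%nat -> f x i = rsum (S m) (fun j => t x j * V j i))
  (Hts : forall x, exists s, In s F /\ forall j, (j <= m)%nat -> t x j <> 0 -> In j s)
  (Htc : forall eps, 0 < eps -> exists delta, 0 < delta /\ forall x y j, (j <= m)%nat ->
          dist X x y < delta -> Rabs (t x j - t y j) <= eps) :
  exists g : nat -> Base X -> nat -> R,
    (forall k x, in_realization N m V F (g k x)) /\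
    (forall k, lipschitz_into X N (g k)) /\
    uniform_limit X N g f.
Proof.
  assert (Htle1 : forall x j, (j <= m)%nat -> t x j <= 1).
  { intros x j Hj. rewrite <- (Ht1 x). apply (rsum_ge_term (S m) (t x) j); [intros; apply Ht0; lia|lia]. }
  assert (HSm : 1 <= INR (S m)) by (rewrite S_INR; pose proof (pos_INR m); lra).
  set (eps0 := / (2 * INR (S m))).
  assert (Heps0 : 0 < eps0) by (apply Rinv_0_lt_compat; lra).
  assert (Heps0' : INR (S m) * eps0 = / 2) by (unfold eps0; field; lra).
  destruct (Htc eps0 Heps0) as [d0 [Hd0 Hc0]].
  set (L0 := / d0).
  assert (HL0 : 0 < L0) by (apply Rinv_0_lt_compat; lra).
  set (h := fun (k : nat) j x => infc X (fun y => t y j) ((INR k + 1) * L0) x).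
  set (Sx := fun k x => rsum (S m) (fun j => h k j x)).
  assert (Hh0 : forall k j x, 0 <= h k j x) by (intros; apply infc_nonneg).
  assert (Hh1 : forall k j x, (j <= m)%nat -> h k j x <= t x j).
  { intros k j x Hj. unfold h. eapply Rle_trans; [apply infc_le_u|]. rewrite Rabs_right; [lra|]. apply Rle_ge, Ht0; auto. }
  assert (Hacc : forall e d, 0 <= e -> 0 < d ->
            (forall x y j, (j <= m)%nat -> dist X x y < d -> Rabs (t x j - t y j) <= e) ->
            forall k, 1 <= (INR k + 1) * L0 * d -> forall x j, (j <= m)%nat -> t x j - e <= h k j x).
  { intros e d He Hd Hc k Hk x j Hj. unfold h.
    apply (infc_close X (fun y => t y j) ((INR k + 1) * L0) d e); auto.
    all: try (intros y; split; [apply Ht0|apply Htle1]; auto). }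
  assert (HSacc : forall e d, 0 <= e -> 0 < d ->
            (forall x y j, (j <= m)%nat -> dist X x y < d -> Rabs (t x j - t y j) <= e) ->
            forall k, 1 <= (INR k + 1) * L0 * d -> forall x, 1 - INR (S m) * e <= Sx k x).
  { intros e d He Hd Hc k Hk x. unfold Sx. rewrite <- (Ht1 x), <- rsum_const, <- rsum_minus.
    apply rsum_le. intros j Hj. apply (Hacc e d); auto; lia. }
  assert (HS : forall k x, / 2 <= Sx k x).
  { intros k x. apply Rle_trans with (1 - INR (S m) * eps0); [rewrite Heps0'; lra|].
    apply (HSacc eps0 d0); try lra; auto.
    unfold L0. rewrite Rmult_assoc, Rinv_l by lra. pose proof (pos_INR k); lra. }
  assert (HSle : forall k x, Sx k x <= 1).
  { intros k x. rewrite <- (Ht1 x). apply rsum_le. intros j Hj. apply Hh1. lia. }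
  exists (fun k x i => if Nat.ltb i N then rsum (S m) (fun j => h k j x * / Sx k x * V j i) else 0).
  split; [|split].
  - intros k x. split.
    { intros i Hi. destruct (Nat.ltb_spec i N); [lia|reflexivity]. }
    destruct (Hts x) as [s [Hs Hsj]].
    exists (fun j => h k j x * / Sx k x).
    assert (HSpos : 0 < Sx k x) by (specialize (HS k x); lra).
    split; [|split; [|split]].
    + intros j Hj. apply Rmult_le_pos; [apply Hh0|left; apply Rinv_0_lt_compat; auto].
    + rewrite rsum_scal_r. change (rsum (S m) (fun j => h k j x)) with (Sx k x). field; lra.
    + intros i Hi. destruct (Nat.ltb_spec i N); [reflexivity|lia].
    + exists s; split; auto. intros j Hj Hne. apply Hsj; auto. intros Ht. apply Hne.
      assert (Hz : h k j x = 0) by (pose proof (Hh1 k j x Hj); pose proof (Hh0 k j x); lra).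
      rewrite Hz; ring.
  - intros k. apply lipschitz_of_coords. intros i Hi.
    apply Lip_ext with (a := fun x => rsum (S m) (fun j => V j i * (h k j x * / Sx k x))).
    2:{ intros x. destruct (Nat.ltb_spec i N); [|lia]. apply rsum_ext; intros; ring. }
    apply (Lip_rsum X (S m) (fun j x => V j i * (h k j x * / Sx k x))). intros j Hj.
    apply Lip_scal. apply Lip_mult with (A := 1) (B := 2).
    + apply infc_Lip.
    + apply Lip_inv with (beta := /2); [|lra|auto].
      apply (Lip_rsum X (S m) (fun j x => h k j x)); intros; apply infc_Lip.
    + intros x. rewrite Rabs_right by (apply Rle_ge, Hh0).
      pose proof (Hh1 k j x ltac:(lia)); pose proof (Htle1 x j ltac:(lia)); lra.
    + intros x. specialize (HS k x). rewrite Rabs_right.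
      * rewrite <- (Rinv_inv 2). apply Rinv_le_contravar; lra.
      * left; apply Rinv_0_lt_compat; lra.
  - intros eps Heps.
    set (M := rsum N (fun i => rsum (S m) (fun j => Rabs (V j i)))).
    assert (HM : 0 <= M) by (apply rsum_nonneg; intros; apply rsum_nonneg; intros; apply Rabs_pos).
    set (eta := eps / (M + 1)).
    assert (Heta : 0 < eta) by (unfold eta; apply Rdiv_lt_0_compat; lra).
    assert (HetaM : eta * M < eps).
    { unfold eta. apply Rlt_le_trans with (eps / (M + 1) * (M + 1)).
      apply Rmult_lt_compat_l; [apply Rdiv_lt_0_compat; lra|lra]. right; field; lra. }
    assert (Hm3 : 0 < 2 * INR (S m) + 1) by lra.
    set (e1 := Rmin eps0 (eta / (2 * INR (S m) + 1))).
    assert (He1 : 0 < e1) by (apply Rmin_pos; [lra|apply Rdiv_lt_0_compat; lra]).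
    assert (He1b : (2 * INR (S m) + 1) * e1 <= eta).
    { apply Rle_trans with ((2 * INR (S m) + 1) * (eta / (2 * INR (S m) + 1))).
      apply Rmult_le_compat_l; [lra|apply Rmin_r]. right; field; lra. }
    destruct (Htc e1 He1) as [d1 [Hd1 Hc1]].
    destruct (INR_archimed (L0 * d1) 1) as [k0 Hk0].
    { apply Rmult_lt_0_compat; lra. }
    exists k0. intros k Hk x.
    assert (Hk1 : 1 <= (INR k + 1) * L0 * d1).
    { pose proof (le_INR _ _ Hk). assert (0 < L0 * d1) by (apply Rmult_lt_0_compat; lra).
      rewrite Rmult_assoc. assert (INR k0 * (L0 * d1) <= (INR k + 1) * (L0 * d1)) by (apply Rmult_le_compat_r; lra). lra. }
    assert (Hhl : forall j, (j <= m)%nat -> t x j - e1 <= h k j x) by (intros; apply (Hacc e1 d1); auto; lra).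
    assert (HS1 : 1 - INR (S m) * e1 <= Sx k x) by (apply (HSacc e1 d1); auto; lra).
    specialize (HS k x). specialize (HSle k x).
    set (q := / Sx k x).
    assert (Hq : q * Sx k x = 1) by (unfold q; field; lra).
    assert (Hq1 : 1 <= q) by (unfold q; rewrite <- Rinv_1; apply Rinv_le_contravar; lra).
    assert (Hq2 : q <= 2) by (unfold q; rewrite <- (Rinv_inv 2); apply Rinv_le_contravar; lra).
    assert (Hp : forall j, (j <= m)%nat -> Rabs (h k j x * q - t x j) <= eta).
    { intros j Hj. specialize (Hhl j Hj). pose proof (Hh1 k j x Hj). pose proof (Hh0 k j x).
      pose proof (Htle1 x j Hj).
      assert (Hq1S : q - 1 = q * (1 - Sx k x)) by (rewrite Rmult_minus_distr_l, Hq; ring).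
      assert (Hqb : q - 1 <= 2 * (INR (S m) * e1)).
      { rewrite Hq1S. apply Rmult_le_compat; lra. }
      assert (Hhq : 0 <= h k j x * (q - 1) <= q - 1).
      { split. apply Rmult_le_pos; lra. replace (q - 1) with (1 * (q - 1)) at 2 by ring.
        apply Rmult_le_compat_r; lra. }
      replace (h k j x * q - t x j) with (h k j x * (q - 1) + (h k j x - t x j)) by ring.
      apply Rabs_le. assert (e1 <= eta) by (pose proof (Rmin_l eps0 (eta / (2 * INR (S m) + 1))); nra).
      lra. }
    apply Rle_lt_trans with (eta * M); [|exact HetaM].
    eapply Rle_trans; [apply edist_le_l1|].
    unfold M. rewrite <- rsum_scal_l. apply rsum_le. intros i Hi.
    destruct (Nat.ltb_spec i N); [|lia]. rewrite (Htf x i Hi).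
    rewrite <- rsum_minus. rewrite <- rsum_scal_l.
    eapply Rle_trans; [apply rsum_abs|]. apply rsum_le. intros j Hj.
    replace (h k j x * q * V j i - t x j * V j i) with ((h k j x * q - t x j) * V j i) by ring.
    rewrite Rabs_mult. apply Rmult_le_compat_r; [apply Rabs_pos|]. apply Hp. lia.
Qed.

Module MC.
From mathcomp Require Import all_boot all_algebra.
From mathcomp Require Import Rstruct.
Import GRing.Theory.

Lemma rsum_big n f : rsum n f = (\sum_(i < n) f i)%R.
Proof.
elim: n => [|n IH] /=; first by rewrite big_ord0.
by rewrite big_ord_recr /= IH RplusE.
Qed.

Lemma dual_exists (D n : nat) (W : nat -> nat -> R) :
 (forall c : nat -> R, (forall i, Peano.lt i D -> rsum n (fun k => c k * W k i) = 0) ->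
     forall j, Peano.lt j n -> c j = 0) ->
 exists B : nat -> nat -> R, forall (c : nat -> R) j, Peano.lt j n ->
    c j = rsum D (fun i => rsum n (fun k => c k * W k i) * B i j).
Proof.
case: n => [|n] Hind.
  by exists (fun _ _ => 0) => c j /ltP.
case: D Hind => [|D] Hind.
  exfalso. have := Hind (fun _ => 1) (fun i Hi => ltac:(by move/ltP: Hi)) 0%N (ltac:(apply/ltP)).
  move=> H; apply: R1_neq_R0; exact: H.
pose A : 'M[R]_(n.+1, D.+1) := (\matrix_(k, i) W k i)%R.
have : row_free A.
  apply: inj_row_free => v Hv; apply/rowP => j.
  rewrite !mxE.
  have := Hind (fun k => v ord0 (inord k)) _ j (ltP (ltn_ord j)).
  rewrite inord_val => ->; first by [].
  move=> i /ltP Hi.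
  rewrite rsum_big.
  transitivity ((v *m A)%R ord0 (inord i)); last by rewrite Hv mxE.
  rewrite mxE; apply: eq_bigr => k _.
  by rewrite inord_val mxE inordK // RmultE.
case/row_freeP => B0 HB.
exists (fun i j => B0 (inord i) (inord j)) => c j /ltP Hj.
pose v : 'rV[R]_(n.+1) := (\row_k c k)%R.
have Hv : v = (v *m A *m B0)%R by rewrite -mulmxA HB mulmx1.
have := congr1 (fun M : 'rV_(n.+1) => M ord0 (inord j)) Hv.
cbv beta; rewrite {1}/v mxE inordK // => ->.
rewrite rsum_big mxE.
apply: eq_bigr => i _.
rewrite rsum_big mxE inord_val RmultE; congr (_ * _)%R.
apply: eq_bigr => k _.
by rewrite !mxE RmultE.
Qed.
End MC.


Lemma choice_fun {A B : Type} (P : A -> B -> Prop) : (forall a, exists b, P a b) -> exists g, forall a, P a (g a).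
Proof. intros H. exists (fun a => proj1_sig (constructive_indefinite_description _ (H a))).
  intros a. apply (proj2_sig (constructive_indefinite_description _ (H a))). Qed.

Lemma tcont (X : Metric_Space) (N m : nat) (V : nat -> nat -> R)
  (hV : affinely_independent N m V) (f : Base X -> nat -> R) (t : Base X -> nat -> R)
  (hf : uniformly_continuous_into X N f)
  (Ht1 : forall x, rsum (S m) (t x) = 1)
  (Htf : forall x i, (i < N)%nat -> f x i = rsum (S m) (fun j => t x j * V j i)) :
  forall eps, 0 < eps -> exists delta, 0 < delta /\ forall x y j, (j <= m)%nat ->
          dist X x y < delta -> Rabs (t x j - t y j) <= eps.
Proof.
  set (W := fun k i => if Nat.ltb i N then V k i else 1).
  destruct (MC.dual_exists (S N) (S m) W) as [B HB].
  { intros c Hc j Hj. apply hV; [| |lia].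
    - rewrite <- (Hc N ltac:(lia)). apply rsum_ext. intros k _. unfold W.
      rewrite Nat.ltb_irrefl. ring.
    - intros i Hi. rewrite <- (Hc i ltac:(lia)). apply rsum_ext. intros k _. unfold W.
      destruct (Nat.ltb_spec i N); [reflexivity|lia]. }
  set (C := rsum (S m) (fun j => rsum N (fun i => Rabs (B i j)))).
  assert (HC : 0 <= C) by (apply rsum_nonneg; intros; apply rsum_nonneg; intros; apply Rabs_pos).
  assert (Key : forall x y j, (j <= m)%nat -> Rabs (t x j - t y j) <= C * edist N (f x) (f y)).
  { intros x y j Hj.
    rewrite (HB (fun k => t x k - t y k) j ltac:(lia)).
    change (rsum (S N) ?g) with (rsum N g + g N). cbv beta.
    assert (H0 : rsum (S m) (fun k => (t x k - t y k) * W k N) = 0).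
    { rewrite (rsum_ext _ _ (fun k => t x k - t y k)).
      - rewrite rsum_minus, !Ht1; ring.
      - intros k _. unfold W. rewrite Nat.ltb_irrefl. ring. }
    rewrite H0, Rmult_0_l, Rplus_0_r.
    eapply Rle_trans; [apply rsum_abs|].
    apply Rle_trans with (rsum N (fun i => edist N (f x) (f y) * Rabs (B i j))).
    - apply rsum_le. intros i Hi. rewrite Rabs_mult. apply Rmult_le_compat_r; [apply Rabs_pos|].
      rewrite (rsum_ext _ _ (fun k => t x k * V k i - t y k * V k i)).
      + rewrite rsum_minus, <- !Htf by auto. apply coord_le_edist; auto.
      + intros k _. unfold W. destruct (Nat.ltb_spec i N); [ring|lia].
    - rewrite rsum_scal_l, Rmult_comm. apply Rmult_le_compat_r.
      + unfold edist; apply sqrt_pos.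
      + apply (rsum_ge_term (S m) (fun j => rsum N (fun i => Rabs (B i j))) j); [|lia].
        intros; apply rsum_nonneg; intros; apply Rabs_pos. }
  intros eps Heps.
  destruct (hf (eps / (C + 1))) as [delta [Hd Hdelta]].
  { apply Rdiv_lt_0_compat; lra. }
  exists delta; split; auto. intros x y j Hj Hxy.
  eapply Rle_trans; [apply Key; auto|].
  specialize (Hdelta x y Hxy).
  apply Rle_trans with (C * (eps / (C + 1))).
  - apply Rmult_le_compat_l; lra.
  - apply Rle_trans with ((C + 1) * (eps / (C + 1))).
    + apply Rmult_le_compat_r; [left; apply Rdiv_lt_0_compat|]; lra.
    + right; field; lra.
Qed.

Theorem corollary3p7 (X : Metric_Space) (N m : nat) (V : nat -> nat -> R)
    (F : list (list nat))
    (hV : affinely_independent N m V) (hF : simplicial_complex m F)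
    (f : Base X -> nat -> R)
    (hfK : forall x, in_realization N m V F (f x))
    (hf : uniformly_continuous_into X N f) :
  exists g : nat -> Base X -> nat -> R,
    (forall k x, in_realization N m V F (g k x)) /\
    (forall k, lipschitz_into X N (g k)) /\
    uniform_limit X N g f.
Proof.
  destruct (choice_fun _ (fun x => proj2 (hfK x))) as [t Ht].
  apply (core X N m V F f t).
  - intros x j Hj. apply (proj1 (Ht x)); auto.
  - intros x. apply (proj1 (proj2 (Ht x))).
  - intros x i Hi. apply (proj1 (proj2 (proj2 (Ht x)))); auto.
  - intros x. apply (proj2 (proj2 (proj2 (Ht x)))).
  - apply (tcont X N m V hV f t hf).
    + intros x. apply (proj1 (proj2 (Ht x))).
    + intros x i Hi. apply (proj1 (proj2 (proj2 (Ht x)))); auto.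
Qed.
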